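(* Let $a\in(-2,0)$, $r(x)=ax/(1+x)$ for $x>-1$, $A_a(m)=m+r(m)+\frac{1}{r(m)}\int_m^0 r(s)\,ds$, and let $m\in(-1,0)$ and $M>0$ with $M\le A_a(m)$. Then $$\beta_-:=\frac{1}{2a}+\frac{m}{r(M)}>0.$$ *)

(* Defs.v *)
From Stdlib Require Import Reals.
From Coquelicot Require Import Coquelicot.
Open Scope R_scope.

Definition r_fun (a x : R) : R := a * x / (1 + x).

Definition A_fun (a m : R) : R :=
  m + r_fun a m + (1 / r_fun a m) * RInt (r_fun a) m 0.

(* Main.v *)
Require Import Defs.
From Stdlib Require Import Reals Lra Psatz.
From Coquelicot Require Import Coquelicot.
Open Scope R_scope.

Lemma RInt_r (a m : R) : -1 < m < 0 ->
  RInt (r_fun a) m 0 = a * (ln (1 + m) - m).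
Proof.
  intros [H1 H2].
  apply is_RInt_unique.
  replace (a * (ln (1 + m) - m)) with
    (minus ((fun s => a * (s - ln (1 + s))) 0) ((fun s => a * (s - ln (1 + s))) m)).
  2: { unfold minus, plus, opp; simpl. rewrite Rplus_0_r, ln_1. ring. }
  apply (is_RInt_derive (fun s => a * (s - ln (1 + s))) (r_fun a)).
  - intros x Hx. rewrite Rmin_left in Hx by lra. rewrite Rmax_right in Hx by lra.
    unfold r_fun. auto_derive. lra. field. lra.
  - intros x Hx. rewrite Rmin_left in Hx by lra. rewrite Rmax_right in Hx by lra.
    unfold r_fun. apply continuity_pt_filterlim.
    apply continuity_pt_div.
    + apply continuity_pt_mult. apply continuity_pt_const. intros u v; reflexivity.
      apply continuity_pt_id.
    + apply continuity_pt_plus. apply continuity_pt_const. intros u v; reflexivity.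
      apply continuity_pt_id.
    + lra.
Qed.

Theorem lemma4p1 (a m M : R) :
  -2 < a < 0 -> -1 < m < 0 -> 0 < M -> M <= A_fun a m ->
  1 / (2 * a) + m / r_fun a M > 0.
Proof.
  intros Ha Hm HM HA.
  unfold A_fun in HA. rewrite RInt_r in HA by lra.
  set (L := ln (1 + m)) in *.
  assert (HL : L >= m / (1 + m)).
  { assert (E : exp L = 1 + m) by (unfold L; apply exp_ln; lra).
    pose proof (exp_ineq1_le (- L)) as H. rewrite exp_Ropp, E in H.
    assert (H' : 1 - L <= / (1 + m)) by lra.
    apply Rle_ge. unfold Rdiv.
    replace (m * / (1 + m)) with (1 - / (1 + m)) by (field; lra). lra. }
  assert (Hm1 : 0 < 1 + m) by lra.
  assert (HL2 : (1 + m) * L >= m).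
  { apply Rge_le in HL. apply Rle_ge.
    apply (Rmult_le_compat_l (1 + m)) in HL; [|lra].
    replace ((1 + m) * (m / (1 + m))) with m in HL by (field; lra). lra. }
  unfold r_fun in *.
  assert (Ht : 1 / (a * m / (1 + m)) * (a * (L - m)) = (1 + m) * (L - m) / m).
  { field. repeat split; lra. }
  rewrite Ht in HA.
  assert (Hb : (1 + m) * (L - m) / m <= - m).
  { apply (Rmult_le_reg_r (- m)); [lra|].
    replace ((1 + m) * (L - m) / m * - m) with (- ((1 + m) * (L - m))) by (field; lra).
    nra. }
  assert (HM2 : M <= a * m / (1 + m)) by lra.
  assert (HM3 : M * (1 + m) <= a * m).
  { apply (Rmult_le_compat_r (1 + m)) in HM2; [|lra].
    replace (a * m / (1 + m) * (1 + m)) with (a * m) in HM2 by (field; lra). lra. }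
  replace (1 / (2 * a) + m / (a * M / (1 + M))) with
    ((M + 2 * m * (1 + M)) / (2 * a * M)) by (field; repeat split; lra).
  assert (Hneg : M + 2 * m * (1 + M) < 0) by nra.
  apply Rlt_gt. unfold Rdiv. assert (Hi : / (2 * a * M) < 0) by (apply Rinv_lt_0_compat; nra).
  nra.
Qed.
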